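(* Let $\sigma$ be a finite relational signature and $n\le k$ positive integers. Then $(\mathbb{H}_{n,k},\epsilon^{n,k},\delta^{n,k})$ is a comonad on the category $\mathcal{R}(\sigma)$ of $\sigma$-structures and homomorphisms.
   Context: For $m\in\mathbb{N}$, $[m]=\{1,\dots,m\}$. For a $\sigma$-structure $\mathcal{A}$, $\mathbb{T}_k\mathcal{A}$ is the $\sigma$-structure whose universe is the set of nonempty finite lists over $A\times[k]$; $\epsilon_{\mathcal{A}}(s)$ is the first component of the last pair of $s$; a tuple $(s_1,\dots,s_r)$ is in $R^{\mathbb{T}_k\mathcal{A}}$ iff the $s_i$ are pairwise comparable in the prefix order, $(\epsilon_{\mathcal{A}}(s_1),\dots,\epsilon_{\mathcal{A}}(s_r))\in R^{\mathcal{A}}$, and whenever $s_i$ is a prefix of $s_j$ and $s_i$ ends with a pair $(a,p)$, no prefix of $s_j$ properly extending $s_i$ ends with a pair $(a',p)$ for any $a'\in A$. For a homomorphism $f$, $\mathbb{T}_kf$ applies $f$ to the first component of every pair. $\delta_{\mathcal{A}}:\mathbb{T}_k\mathcal{A}\to\mathbb{T}_k\mathbb{T}_k\mathcal{A}$ sends $[(a_1,p_1),\dots,(a_m,p_m)]$ to $[(s_1,p_1),\dots,(s_m,p_m)]$ where $s_i=[(a_1,p_1),\dots,(a_i,p_i)]$. A list in $(A\times[k])^{*}$ is basic if it has at most $n$ pairs and its pebble indices (second components) are pairwise distinct. The map $S_n$ from lists over $A\times[k]$ to lists of basic lists is defined by: $S_n(s)=[s]$ if $s$ is basic; otherwise $S_n(s)=[a];S_n(t)$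 where $s=a\cdot t$ and $a$ is the longest basic prefix of $s$ (here $\cdot$ is concatenation and $x;\ell$ / $\ell;x$ denote prepending/appending an element). For a list $s$ and $p\in[k]$, write $S_n(s)=t;[s']$ with $s'$ its last block, and set $\alpha_n(s,p)=t;[s']$ if $|s'|=n$ or $p$ occurs as a pebble index in $s'$, and $\alpha_n(s,p)=t$ otherwise. The relation $\approx_n$ on $\mathbb{T}_k\mathcal{A}$ is: $[s;(a,i)]\approx_n[t;(b,j)]$ iff $a=b$ and $\alpha_n(s,i)=\alpha_n(t,j)$. $\mathbb{H}_{n,k}\mathcal{A}=\mathbb{T}_k\mathcal{A}/{\approx_n}$, where a tuple of equivalence classes is in $R$ iff some choice of representatives is in $R^{\mathbb{T}_k\mathcal{A}}$; $q_n:\mathbb{T}_k\mathcal{A}\to\mathbb{H}_{n,k}\mathcal{A}$ is the quotient map, and $\mathbb{H}_{n,k}f$ is the map induced by $\mathbb{T}_kf$ on classes. The counit $\epsilon^{n,k}_{\mathcal{A}}:\mathbb{H}_{n,k}\mathcal{A}\to\mathcal{A}$ is determined by $\epsilon_{\mathcal{A}}=\epsilon^{n,k}_{\mathcal{A}}\circ q_n$, and the comultiplication $\delta^{n,k}_{\mathcal{A}}:\mathbb{H}_{n,k}\mathcal{A}\to\mathbb{H}_{n,k}\mathbb{H}_{n,k}\mathcal{A}$ is determined by $\delta^{n,k}_{\mathcal{A}}\circ q_n=q_n\circ\mathbb{T}_k q_n\circ\delta_{\mathcal{A}}$ (the outer $q_n$ being the quotient map for $\mathbb{H}_{n,k}\mathcal{A}$).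 *)

(* Defs.v *)
From Stdlib Require Import ClassicalEpsilon.
From mathcomp Require Import all_boot.

Set Implicit Arguments.
Unset Strict Implicit.
Unset Printing Implicit Defensive.

Section Structures.
Variables (sig : finType) (ar : sig -> nat).

Record struct := Struct {
  carrier :> Type;
  srel : forall r : sig, ('I_(ar r) -> carrier) -> Prop
}.
Arguments srel : clear implicits.
Arguments srel s r t.

Definition is_hom (A B : struct) (f : A -> B) : Prop :=
  forall (r : sig) (t : 'I_(ar r) -> A), srel A r t -> srel B r (f \o t).

End Structures.
Arguments srel {sig ar} s r t.
Arguments is_hom {sig ar} A B f.

(* The pebbling construction T_k.  Pebble indices [k] = {1..k} are         *)
(* represented by 'I_k.  A nonempty list [s ; x] (s followed by the final   *)
(* pair x) is represented by the pair (s, x) : seq (X * 'I_k) * (X * 'I_k). *)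

Section Pebbling.
Variables (k n : nat).

Definition TT (X : Type) : Type := (seq (X * 'I_k) * (X * 'I_k))%type.

Definition tolist (X : Type) (t : TT X) : seq (X * 'I_k) := rcons t.1 t.2.

Definition epsT (X : Type) (t : TT X) : X := t.2.1.

Definition Tmap (X Y : Type) (f : X -> Y) (t : TT X) : TT Y :=
  ([seq (f x.1, x.2) | x <- t.1], (f t.2.1, t.2.2)).

Definition prefix (Z : Type) (s t : seq Z) : Prop := exists u, t = s ++ u.

Section TRel.
Variables (sig : finType) (ar : sig -> nat).

Definition T_rel (A : struct ar) (r : sig) (t : 'I_(ar r) -> TT A) : Prop :=
  (forall i j, prefix (tolist (t i)) (tolist (t j)) \/
               prefix (tolist (t j)) (tolist (t i))) /\
  srel A r (fun i => epsT (t i)) /\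
  (forall i j, prefix (tolist (t i)) (tolist (t j)) ->
     forall u : seq (A * 'I_k),
       prefix (tolist (t i)) u -> prefix u (tolist (t j)) ->
       size (tolist (t i)) < size u ->
       (last (t i).2 u).2 <> (t i).2.2).

Definition Tstruct (A : struct ar) : struct ar := Struct (@T_rel A).
End TRel.
Arguments T_rel {sig ar} A r t.
Arguments Tstruct {sig ar} A.

(* comultiplication delta_A of T_k:
   [(a1,p1),...,(am,pm)] |-> [(s1,p1),...,(sm,pm)], s_i = first i pairs. *)
Definition deltaT (X : Type) (t : TT X) : TT (TT X) :=
  let l := tolist t in
  ([seq ((take i l, nth t.2 l i), (nth t.2 l i).2) | i <- iota 0 (size t.1)],
   (t, t.2.2)).

Definition basic (X : Type) (s : seq (X * 'I_k)) : bool :=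
  (size s <= n) && uniq [seq x.2 | x <- s].

Definition lbp (X : Type) (s : seq (X * 'I_k)) : nat :=
  \max_(m < (size s).+1 | basic (take m s)) m.

(* S_n, defined with fuel; the fuel [size s] is always sufficient when n>0,
   since every non-basic step removes at least one pair. *)
Fixpoint Sfuel (X : Type) (fuel : nat) (s : seq (X * 'I_k)) : seq (seq (X * 'I_k)) :=
  if basic s then [:: s] else
  match fuel with
  | 0 => [:: s]
  | fuel'.+1 => take (lbp s) s :: Sfuel fuel' (drop (lbp s) s)
  end.

Definition Sn (X : Type) (s : seq (X * 'I_k)) : seq (seq (X * 'I_k)) :=
  Sfuel (size s) s.

Definition alpha (X : Type) (s : seq (X * 'I_k)) (p : 'I_k) : seq (seq (X * 'I_k)) :=
  let B := Sn s in
  let s' := last [::] B in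
  if (size s' == n) || (p \in [seq x.2 | x <- s']) then B
  else take (size B).-1 B.

Definition approx (X : Type) (s t : TT X) : Prop :=
  s.2.1 = t.2.1 /\ alpha s.1 s.2.2 = alpha t.1 t.2.2.

Definition HT (X : Type) : Type := {P : TT X -> Prop | exists s, P = approx s}.

Definition q (X : Type) (s : TT X) : HT X :=
  exist (fun P => exists s', P = approx s') (approx s) (ex_intro _ s erefl).

Definition rep (X : Type) (c : HT X) : TT X :=
  proj1_sig (constructive_indefinite_description _ (proj2_sig c)).

Section HStruct.
Variables (sig : finType) (ar : sig -> nat).

Definition H_rel (A : struct ar) (r : sig) (c : 'I_(ar r) -> HT A) : Prop :=
  exists t : 'I_(ar r) -> TT A, (forall i, q (t i) = c i) /\ T_rel A r t.

Definition Hstruct (A : struct ar) : struct ar := Struct (@H_rel A).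
End HStruct.
Arguments Hstruct {sig ar} A.

Definition Hmap (X Y : Type) (f : X -> Y) (c : HT X) : HT Y := q (Tmap f (rep c)).

Definition epsH (X : Type) (c : HT X) : X := epsT (rep c).

Definition deltaH (X : Type) (c : HT X) : HT (HT X) :=
  q (Tmap (@q X) (deltaT (rep c))).

End Pebbling.

Arguments q k n {X} s.
Arguments rep k n {X} c.
Arguments Hmap k n {X Y} f c.
Arguments epsH k n {X} c.
Arguments deltaH k n {X} c.
Arguments Tmap k {X Y} f t.
Arguments deltaT k {X} t.
Arguments epsT k {X} t.
Arguments Hstruct k n {sig ar} A.

(* Main.v *)
Require Import Defs.
From mathcomp Require Import all_boot.
From Stdlib Require Import FunctionalExtensionality PropExtensionality ProofIrrelevance ClassicalEpsilon.

Set Implicit Arguments.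
Unset Strict Implicit.
Unset Printing Implicit Defensive.

Lemma take_reshape (T : Type) (sh : seq nat) (s : seq T) j :
  take j (reshape sh s) = reshape (take j sh) s.
Proof.
elim: sh s j => [|a sh IH] s [|j] //=. by rewrite IH.
Qed.

Lemma reshape_take (T : Type) (sh : seq nat) (s : seq T) :
  reshape sh s = reshape sh (take (sumn sh) s).
Proof.
elim: sh s => [|a sh IH] s //=.
rewrite take_takel ?leq_addr //; congr (_ :: _).
by rewrite IH [RHS]IH (addnC a) -take_drop take_takel.
Qed.

Lemma sumn_take (sh : seq nat) j : sumn (take j sh) <= sumn sh.
Proof. by rewrite -{2}(cat_take_drop j sh) sumn_cat leq_addr. Qed.

Section Sn.
Variables (k n : nat).

Lemma basic_pebs X Y (s : seq (X * 'I_k)) (t : seq (Y * 'I_k)) :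
  map snd s = map snd t -> basic n s = basic n t.
Proof.
by move=> e; rewrite /basic -(size_map snd s) -(size_map snd t) e.
Qed.

Lemma lbp_pebs X Y (s : seq (X * 'I_k)) (t : seq (Y * 'I_k)) :
  map snd s = map snd t -> lbp n s = lbp n t.
Proof.
move=> e; rewrite /lbp.
have es : size s = size t by rewrite -(size_map snd s) -(size_map snd t) e.
rewrite es; apply: eq_bigl => m; apply: basic_pebs.
by rewrite !map_take e.
Qed.

Lemma Sfuel_flatten X f (s : seq (X * 'I_k)) : flatten (Sfuel n f s) = s.
Proof.
elim: f s => [|f IH] s /=; first by case: ifP => _ /=; rewrite cats0.
case: ifP => _ /=; first by rewrite cats0.
by rewrite IH cat_take_drop.
Qed.

Lemma Sfuel_shape X Y f (s : seq (X * 'I_k)) (t : seq (Y * 'I_k)) :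
  map snd s = map snd t -> shape (Sfuel n f s) = shape (Sfuel n f t).
Proof.
have es : forall X Y (s : seq (X * 'I_k)) (t : seq (Y * 'I_k)),
  map snd s = map snd t -> size s = size t.
  by move=> ? ? s0 t0 e; rewrite -(size_map snd s0) -(size_map snd t0) e.
elim: f s t => [|f IH] s t e /=.
  by rewrite (basic_pebs e); case: ifP => _ /=; rewrite (es _ _ _ _ e).
rewrite (basic_pebs e); case: ifP => _ /=; first by rewrite (es _ _ _ _ e).
rewrite (lbp_pebs e) !size_take (es _ _ _ _ e); congr (_ :: _).
by apply: IH; rewrite !map_drop e.
Qed.

Definition SH X (s : seq (X * 'I_k)) := shape (Sn n s).

Lemma Sn_reshape X (s : seq (X * 'I_k)) : Sn n s = reshape (SH s) s.
Proof. by rewrite /SH -{3}(Sfuel_flatten (size s) s) flattenK. Qed.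

Lemma SH_pebs X Y (s : seq (X * 'I_k)) (t : seq (Y * 'I_k)) :
  map snd s = map snd t -> SH s = SH t.
Proof.
move=> e; rewrite /SH /Sn.
have -> : size s = size t by rewrite -(size_map snd s) -(size_map snd t) e.
exact: Sfuel_shape.
Qed.

Definition ASH X (s : seq (X * 'I_k)) p := shape (alpha n s p).

Lemma alpha_take X (s : seq (X * 'I_k)) p :
  exists j, alpha n s p = take j (Sn n s).
Proof.
rewrite /alpha; case: ifP => _; last by eexists.
by exists (size (Sn n s)); rewrite take_size.
Qed.

Lemma alpha_reshape X (s : seq (X * 'I_k)) p : alpha n s p = reshape (ASH s p) s.
Proof.
have [j e] := alpha_take s p.
rewrite /ASH e /shape map_take -/(shape _) -/(SH s).
by rewrite Sn_reshape take_reshape.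
Qed.

Lemma ASH_pebs X Y (s : seq (X * 'I_k)) (t : seq (Y * 'I_k)) p :
  map snd s = map snd t -> ASH s p = ASH t p.
Proof.
move=> e; rewrite /ASH /alpha.
have eS : SH s = SH t by exact: SH_pebs.
have eB : size (Sn n s) = size (Sn n t).
  by have := congr1 size eS; rewrite /SH /shape !size_map.
have eL : map snd (last [::] (Sn n s)) = map snd (last [::] (Sn n t)).
  rewrite -!(last_map (map snd)) /= !Sn_reshape !map_reshape e.
  by rewrite (SH_pebs e).
have eC : (size (last [::] (Sn n s)) == n) || (p \in [seq x.2 | x <- last [::] (Sn n s)])
   = (size (last [::] (Sn n t)) == n) || (p \in [seq x.2 | x <- last [::] (Sn n t)]).
  by rewrite eL -(size_map snd (last [::] (Sn n s))) eL size_map.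
rewrite eC; case: ifP => _; first exact: eS.
by rewrite /shape !map_take -/(shape _) -/(SH s) -/(SH t) eS eB.
Qed.

Lemma sumn_ASH X (s : seq (X * 'I_k)) p : sumn (ASH s p) <= size s.
Proof.
have [j e] := alpha_take s p.
rewrite /ASH e /shape map_take -/(shape _) -/(SH s).
apply: leq_trans (sumn_take _ _) _.
by rewrite /SH -size_flatten /Sn Sfuel_flatten.
Qed.
End Sn.

Section Q.
Variables (k n : nat).

Lemma alpha_map X Y (g : X * 'I_k -> Y * 'I_k) (hg : forall x, (g x).2 = x.2) s p :
  alpha n (map g s) p = map (map g) (alpha n s p).
Proof.
have e : map snd (map g s) = map snd s by rewrite -map_comp; apply: eq_map.
by rewrite !alpha_reshape (ASH_pebs n p e) map_reshape.
Qed.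

Lemma alpha_eq_take X (s s' : seq (X * 'I_k)) p p' :
  alpha n s p = alpha n s' p' ->
  ASH n s p = ASH n s' p' /\
  take (sumn (ASH n s p)) s = take (sumn (ASH n s p)) s'.
Proof.
move=> e; have eA : ASH n s p = ASH n s' p' by rewrite /ASH e.
split=> //.
have := congr1 flatten e.
rewrite !alpha_reshape -eA (reshape_take (ASH n s p) s) (reshape_take (ASH n s p) s').
rewrite !reshapeKr // size_take; case: ifP => // /negbT; rewrite -leqNgt //.
Qed.

Definition key X (s : TT k X) := (s.2.1, alpha n s.1 s.2.2).

Lemma q_eq X (s t : TT k X) : key s = key t -> q k n s = q k n t.
Proof.
move=> e; rewrite /q; apply: subset_eq_compat.
apply: functional_extensionality => u; apply: propositional_extensionality.
by rewrite /approx; case: e => -> ->.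
Qed.

Lemma q_inj X (s t : TT k X) : q k n s = q k n t -> key s = key t.
Proof.
move=> e; have e1 : approx n s = approx n t by exact: (congr1 (@proj1_sig _ _) e).
have : approx n s t by rewrite e1; split.
by case=> [e2 e3]; rewrite /key e2 e3.
Qed.

Lemma q_rep X (c : HT k n X) : q k n (rep k n c) = c.
Proof.
case: c => P hP; rewrite /rep /=.
case: (constructive_indefinite_description _ _) => s0 e /=.
by apply: subset_eq_compat; rewrite e.
Qed.

Lemma key_rep X (s : TT k X) : key (rep k n (q k n s)) = key s.
Proof. by apply: q_inj; rewrite q_rep. Qed.

Definition gof X Y (f : X -> Y) (x : X * 'I_k) : Y * 'I_k := (f x.1, x.2).

Lemma key_Tmap X Y (f : X -> Y) (s t : TT k X) : key s = key t ->
  key (Tmap k f s) = key (Tmap k f t).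
Proof.
rewrite /key /Tmap /= -/(gof f) => -[e1 e2].
by rewrite !(alpha_map (g := gof f)) // e1 e2.
Qed.

Lemma Hmap_q X Y (f : X -> Y) (s : TT k X) :
  Hmap k n f (q k n s) = q k n (Tmap k f s).
Proof. by rewrite /Hmap; apply: q_eq; apply: key_Tmap; apply: key_rep. Qed.

Lemma epsH_q X (s : TT k X) : epsH k n (q k n s) = epsT k s.
Proof. exact: (congr1 fst (key_rep s)). Qed.

Definition ds X (t : TT k X) : seq (HT k n X * 'I_k) :=
  map (fun i => (q k n (take i (tolist t), nth t.2 (tolist t) i), (nth t.2 (tolist t) i).2))
      (iota 0 (size t.1)).

Lemma Tmap_q_deltaT X (t : TT k X) :
  Tmap k (q k n) (deltaT k t) = (ds t, (q k n t, t.2.2)).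
Proof. by rewrite /Tmap /deltaT /ds /= -map_comp. Qed.

Lemma nth_tolist X (t : TT k X) d i : i < size t.1 -> nth d (tolist t) i = nth d t.1 i.
Proof. by move=> h; rewrite /tolist nth_rcons h. Qed.

Lemma take_tolist X (t : TT k X) i : i <= size t.1 -> take i (tolist t) = take i t.1.
Proof. by move=> h; rewrite /tolist -cats1 takel_cat. Qed.

Lemma ds_pebs X (t : TT k X) : map snd (ds t) = map snd t.1.
Proof.
rewrite /ds -map_comp.
rewrite -{2}(take_size t.1) -(map_nth_iota0 t.2 (leqnn _)) -map_comp.
apply/eq_in_map => i; rewrite mem_iota /= => h.
by rewrite nth_tolist.
Qed.

Lemma ds_take X (t : TT k X) N d : N <= size t.1 ->
  take N (ds t) = map (fun i => (q k n (take i (take N t.1), nth d (take N t.1) i),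
                                 (nth d (take N t.1) i).2)) (iota 0 N).
Proof.
move=> hN; rewrite /ds -map_take take_iota (minn_idPl hN).
apply/eq_in_map => i; rewrite mem_iota /= => hi.
have hi' : i < size t.1 by apply: leq_trans hN.
have e1 : nth t.2 (tolist t) i = nth d (take N t.1) i.
  by rewrite nth_tolist // nth_take // (set_nth_default d).
have e2 : take i (tolist t) = take i (take N t.1).
  by rewrite take_tolist ?(ltnW hi') // take_takel // ltnW.
by rewrite e1 e2.
Qed.

Lemma key_delta X (s t : TT k X) : key s = key t ->
  key (Tmap k (q k n) (deltaT k s)) = key (Tmap k (q k n) (deltaT k t)).
Proof.
move=> e; rewrite !Tmap_q_deltaT /key /=; congr pair; first exact: q_eq.
case: e => _ /alpha_eq_take [eA eT].
have hs := sumn_ASH n s.1 s.2.2; have ht := sumn_ASH n t.1 t.2.2.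
rewrite !alpha_reshape (ASH_pebs n s.2.2 (ds_pebs s)) (ASH_pebs n t.2.2 (ds_pebs t)) -eA.
rewrite reshape_take [RHS]reshape_take.
have ht' : sumn (ASH n s.1 s.2.2) <= size t.1 by rewrite eA.
rewrite (@ds_take X s _ s.2 hs) (@ds_take X t _ s.2 ht') eT.
reflexivity.
Qed.

Lemma deltaH_q X (s : TT k X) :
  deltaH k n (q k n s) = q k n (Tmap k (q k n) (deltaT k s)).
Proof. by rewrite /deltaH; apply: q_eq; apply: key_delta; apply: key_rep. Qed.

End Q.

Section T.
Variable k : nat.

Lemma Tmap_id X (t : TT k X) : Tmap k id t = t.
Proof.
case: t => s [a p]; rewrite /Tmap /=; congr pair.
by elim: s => //= -[b i] s ->.
Qed.

Lemma Tmap_comp X Y Z (f : X -> Y) (g : Y -> Z) (t : TT k X) :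
  Tmap k g (Tmap k f t) = Tmap k (g \o f) t.
Proof. by rewrite /Tmap /= -map_comp. Qed.

Lemma Tmap_ext X Y (f g : X -> Y) (t : TT k X) : f =1 g -> Tmap k f t = Tmap k g t.
Proof.
move=> e; rewrite /Tmap e; congr pair; apply: eq_map => x; by rewrite e.
Qed.

Lemma tolist_Tmap X Y (f : X -> Y) (t : TT k X) :
  tolist (Tmap k f t) = map (gof f) (tolist t).
Proof. by rewrite /tolist /Tmap /= map_rcons. Qed.

Lemma deltaT_Tmap X Y (f : X -> Y) (s : TT k X) :
  deltaT k (Tmap k f s) = Tmap k (Tmap k f) (deltaT k s).
Proof.
rewrite /deltaT tolist_Tmap /Tmap /= size_map -map_comp; congr pair.
apply/eq_in_map => i; rewrite mem_iota /= => hi.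
have hi' : i < size (tolist s) by rewrite /tolist size_rcons ltnW.
rewrite map_take (nth_map s.2) //.
Qed.

Lemma Tmap_eps_delta X (s : TT k X) : Tmap k (@epsT k X) (deltaT k s) = s.
Proof.
case: s => s1 [a p]; rewrite /Tmap /deltaT /= -map_comp; congr pair.
transitivity (map (nth (a, p) s1) (iota 0 (size s1))); last first.
  by rewrite map_nth_iota0 // take_size.
apply/eq_in_map => i; rewrite mem_iota /= => hi.
rewrite /epsT /= nth_rcons hi.
by case: (nth _ _ _).
Qed.

Lemma deltaT_deltaT X (s : TT k X) :
  deltaT k (deltaT k s) = Tmap k (@deltaT k X) (deltaT k s).
Proof.
case: s => s1 x.
set l := rcons s1 x.
set G := fun i => ((take i l, nth x l i), (nth x l i).2).
have eL : tolist (deltaT k (s1, x)) = map G (iota 0 (size s1).+1).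
  have -> : iota 0 (size s1).+1 = rcons (iota 0 (size s1)) (size s1).
    by rewrite -cats1 -addn1 iotaD.
  rewrite /tolist /deltaT /= -/l -/G map_rcons.
  congr rcons; rewrite /G nth_rcons ltnn eqxx.
  by rewrite /l -cats1 take_size_cat.
rewrite {1}/deltaT eL size_map size_iota /Tmap.
set L := map G (iota 0 (size s1).+1); rewrite /=.
congr pair; rewrite /deltaT /= -/l -/G -map_comp.
apply/eq_in_map => i; rewrite mem_iota /= => hi.
have hil : i < size l by rewrite /l size_rcons ltnW.
have e1 : take i L = map G (iota 0 i).
  by rewrite /L -map_take take_iota (minn_idPl (leqW (ltnW hi))).
have e2 : nth ((s1, x), x.2) L i = G i.
  rewrite /L (nth_map 0); last by rewrite size_iota ltnS; exact: ltnW hi.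
  rewrite nth_iota ?add0n //; rewrite ltnS; exact: ltnW hi.
clearbody L. rewrite e1 e2.
have eG : G i = ((take i l, nth x l i), (nth x l i).2) by [].
rewrite eG; congr (_, _); congr (_, _).
have hil' : i <= size l by exact: ltnW hil.
rewrite (size_takel hil').
change (tolist (take i l, nth x l i)) with (rcons (take i l) (nth x l i)).
apply/eq_in_map => j; rewrite mem_iota => /andP[_ hj].
rewrite add0n in hj.
have sz : size (take i l) = i by exact: size_takel.
have t1 : take j (rcons (take i l) (nth x l i)) = take j l.
  by rewrite -cats1 takel_cat ?sz ?(ltnW hj) // take_takel // ltnW.
have t2 : nth (nth x l i) (rcons (take i l) (nth x l i)) j = nth x l j.
  rewrite nth_rcons sz hj nth_take //; apply: set_nth_default.
  exact: ltn_trans hj hil.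
by rewrite t1 t2.
Qed.

End T.

Section Rel.
Variable k : nat.

Lemma last_snd X Y (x0 : X * 'I_k) (y0 : Y * 'I_k) a b :
  map snd a = map snd b -> 0 < size a -> (last x0 a).2 = (last y0 b).2.
Proof.
case: a => [|x a] // ; case: b => [|y b] // e _.
rewrite -!(last_map snd) /=; by case: e => -> ->.
Qed.

Lemma size_pebs X Y (a : seq (X * 'I_k)) (b : seq (Y * 'I_k)) :
  map snd a = map snd b -> size a = size b.
Proof. by move=> e; rewrite -(size_map snd a) e size_map. Qed.

Definition C3 X (x0 : X * 'I_k) (Li Lj : seq (X * 'I_k)) :=
  forall u, Defs.prefix Li u -> Defs.prefix u Lj -> size Li < size u ->
    (last x0 u).2 <> (last x0 Li).2.

Lemma C3_transfer X Y (x0 : X * 'I_k) (y0 : Y * 'I_k) Li Lj Ki Kj :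
  Defs.prefix Li Lj -> Defs.prefix Ki Kj ->
  map snd Li = map snd Ki -> map snd Lj = map snd Kj -> 0 < size Li ->
  C3 x0 Li Lj -> C3 y0 Ki Kj.
Proof.
move=> [v hv] [w hw] ei ej hpos hC u [w1 hu] [w2 hu2] hsz.
have szi := size_pebs ei; have szj := size_pebs ej.
have hszu : size u <= size Lj by rewrite szj hu2 size_cat leq_addr.
set u0 := take (size u) Lj.
have hu0 : size u0 = size u by rewrite size_takel.
have p1 : Defs.prefix Li u0.
  exists (take (size u - size Li) v).
  have hl : size Li <= size u by rewrite szi; exact: ltnW.
  by rewrite /u0 hv take_cat ltnNge hl.
have p2 : Defs.prefix u0 Lj by exists (drop (size u) Lj); rewrite cat_take_drop.
have := hC u0 p1 p2; rewrite hu0 szi => /(_ hsz) hne.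
have eu : map snd u = map snd u0.
  by rewrite /u0 map_take ej hu2 map_cat take_size_cat // size_map.
rewrite (@last_snd _ _ y0 x0 u u0 eu) ?(@last_snd _ _ y0 x0 Ki Li) //.
- by rewrite -szi.
- by apply: leq_ltn_trans hsz.
Qed.

Lemma prefix_map X Y (g : X -> Y) a b :
  Defs.prefix a b -> Defs.prefix (map g a) (map g b).
Proof. by move=> [u ->]; exists (map g u); rewrite map_cat. Qed.

Lemma prefix_size X (a b : seq X) : Defs.prefix a b -> size a <= size b.
Proof. by move=> [u ->]; rewrite size_cat leq_addr. Qed.

Lemma prefix_back X Y (a b : seq X) (a' b' : seq Y) :
  Defs.prefix a b \/ Defs.prefix b a -> Defs.prefix a' b' ->
  size a' = size a -> size b' = size b -> Defs.prefix a b.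
Proof.
case=> // -[w hw] hp sa sb.
have h1 := prefix_size hp.
have : size w = 0.
  by move: h1; rewrite sa sb hw size_cat -{2}(addn0 (size b)) leq_add2l leqn0 => /eqP.
move/size0nil => w0; exists [::]; by rewrite hw w0 !cats0.
Qed.

Lemma T_rel_transfer (sig : finType) (ar : sig -> nat) (A B : struct ar) (r : sig)
  (t : 'I_(ar r) -> TT k A) (t' : 'I_(ar r) -> TT k B) :
  (forall i, map snd (tolist (t' i)) = map snd (tolist (t i))) ->
  (forall i j, Defs.prefix (tolist (t i)) (tolist (t j)) ->
               Defs.prefix (tolist (t' i)) (tolist (t' j))) ->
  T_rel t -> srel B r (fun i => epsT k (t' i)) -> T_rel t'.
Proof.
move=> hs hp [h1 [_ h3]] h2; split; [|split] => //.
  by move=> i j; case: (h1 i j) => h; [left|right]; apply: hp.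
move=> i j hij u pu pu' su.
have pij : Defs.prefix (tolist (t i)) (tolist (t j)).
  apply: (prefix_back (h1 i j) hij); exact: size_pebs.
have hC : C3 (t i).2 (tolist (t i)) (tolist (t j)).
  move=> v pv pv' sv; rewrite /tolist last_rcons; exact: h3 pv pv' sv.
have hpos : 0 < size (tolist (t i)) by rewrite /tolist size_rcons.
have hC' := C3_transfer (y0 := (t' i).2) pij hij (esym (hs i)) (esym (hs j))
  hpos hC.
have := hC' u pu pu' su; by rewrite /tolist last_rcons.
Qed.

End Rel.

Section D.
Variables (k n : nat).

Definition DQ X (d : X * 'I_k) (l : seq (X * 'I_k)) : seq (HT k n X * 'I_k) :=
  map (fun i => (q k n (take i l, nth d l i), (nth d l i).2)) (iota 0 (size l)).

Lemma tolist_delta X (s : TT k X) :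
  tolist (Tmap k (q k n) (deltaT k s)) = DQ s.2 (tolist s).
Proof.
rewrite Tmap_q_deltaT /DQ /tolist /=.
have -> : size (rcons s.1 s.2) = (size s.1) + 1 by rewrite size_rcons addn1.
rewrite iotaD map_cat cats1 /=; congr rcons.
rewrite nth_rcons ltnn eqxx -cats1 take_size_cat //.
by case: s.
Qed.

Lemma DQ_prefix X (d d' : X * 'I_k) a b :
  Defs.prefix a b -> Defs.prefix (DQ d a) (DQ d' b).
Proof.
move=> [w ->]; rewrite /DQ size_cat iotaD map_cat.
eexists; congr (_ ++ _).
apply/eq_in_map => i; rewrite mem_iota => /andP[_ hi]; rewrite add0n in hi.
rewrite takel_cat ?(ltnW hi) // nth_cat hi (set_nth_default d') //.
Qed.

Lemma DQ_pebs X (d : X * 'I_k) l : map snd (DQ d l) = map snd l.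
Proof.
rewrite /DQ -map_comp.
transitivity (map snd (map (nth d l) (iota 0 (size l)))).
  by rewrite -map_comp.
by rewrite map_nth_iota0 // take_size.
Qed.

End D.

Theorem theorem3p12 (sig : finType) (ar : sig -> nat) (n k : nat)
  (n_pos : 0 < n) (n_le_k : n <= k) :
  let H := Hstruct k n (sig:=sig) (ar:=ar) in
  (forall (A B : struct ar) (f : A -> B) (s : TT k A),
      is_hom A B f -> Hmap k n f (q k n s) = q k n (Tmap k f s)) /\
  (forall (A : struct ar) (s : TT k A), epsH k n (q k n s) = epsT k s) /\
  (forall (A : struct ar) (s : TT k A),
      deltaH k n (q k n s) = q k n (Tmap k (q k n) (deltaT k s))) /\
  (forall (A B : struct ar) (f : A -> B),
      is_hom A B f -> is_hom (H A) (H B) (Hmap k n f)) /\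
  (forall A : struct ar, Hmap k n (@id A) = @id (H A)) /\
  (forall (A B C : struct ar) (f : A -> B) (g : B -> C),
      is_hom A B f -> is_hom B C g ->
      Hmap k n (g \o f) = Hmap k n g \o Hmap k n f) /\
  (forall A : struct ar, is_hom (H A) A (epsH k n)) /\
  (forall A : struct ar, is_hom (H A) (H (H A)) (deltaH k n)) /\
  (forall (A B : struct ar) (f : A -> B),
      is_hom A B f -> f \o epsH k n = epsH k n \o Hmap k n f) /\
  (forall (A B : struct ar) (f : A -> B),
      is_hom A B f ->
      Hmap k n (Hmap k n f) \o deltaH k n = deltaH k n \o Hmap k n f) /\
  (forall A : struct ar,
      epsH k n \o deltaH k n = @id (H A)) /\
  (forall A : struct ar,
      Hmap k n (epsH k n) \o deltaH k n = @id (H A)) /\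
  (forall A : struct ar,
      deltaH k n \o deltaH k n = Hmap k n (deltaH k n) \o deltaH k n :> (H A -> H (H (H A)))).
Proof.
move=> H.
have qsurj : forall X (c : HT k n X), exists s, c = q k n s.
  by move=> X c; exists (rep k n c); rewrite q_rep.
split; first by move=> A B f s _; exact: Hmap_q.
split; first by move=> A s; exact: epsH_q.
split; first by move=> A s; exact: deltaH_q.
split.
  move=> A B f hf r c [t [ht hT]].
  exists (fun i => Tmap k f (t i)); split.
    by move=> i /=; rewrite -ht Hmap_q.
  apply: (T_rel_transfer _ _ hT).
  - by move=> i; rewrite tolist_Tmap -map_comp.
  - by move=> i j hij; rewrite !tolist_Tmap; apply: prefix_map.
  - exact: (hf r _ hT.2.1).
split.
  move=> A; apply: functional_extensionality => c /=.
  by rewrite /Hmap Tmap_id q_rep.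
split.
  move=> A B C f g _ _; apply: functional_extensionality => c /=.
  have [s ->] := qsurj _ c; by rewrite !Hmap_q Tmap_comp.
split.
  move=> A r c [t [ht hT]].
  have -> : (epsH k n \o c) = (fun i => epsT k (t i)).
    by apply: functional_extensionality => i /=; rewrite -ht epsH_q.
  exact: hT.2.1.
split.
  move=> A r c [t [ht hT]].
  exists (fun i => Tmap k (q k n) (deltaT k (t i))); split.
    by move=> i /=; rewrite -ht deltaH_q.
  apply: (T_rel_transfer _ _ hT).
  - by move=> i; rewrite tolist_delta DQ_pebs.
  - by move=> i j hij; rewrite !tolist_delta; apply: DQ_prefix.
  - have -> : (fun i => epsT k (Tmap k (q k n) (deltaT k (t i)))) = (fun i => q k n (t i)).
      by apply: functional_extensionality => i; rewrite Tmap_q_deltaT.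
    by exists t.
split.
  move=> A B f _; apply: functional_extensionality => c /=.
  have [s ->] := qsurj _ c.
  by rewrite Hmap_q !epsH_q.
split.
  move=> A B f _; apply: functional_extensionality => c /=.
  have [s ->] := qsurj _ c.
  rewrite deltaH_q !Hmap_q deltaH_q deltaT_Tmap !Tmap_comp.
  congr (q k n _); apply: Tmap_ext => x /=; exact: Hmap_q.
split.
  move=> A; apply: functional_extensionality => c /=.
  have [s ->] := qsurj _ c.
  by rewrite deltaH_q epsH_q Tmap_q_deltaT.
split.
  move=> A; apply: functional_extensionality => c /=.
  have [s ->] := qsurj _ c.
  rewrite deltaH_q Hmap_q Tmap_comp.
  rewrite (@Tmap_ext _ _ _ _ (@epsT k A)); first by rewrite Tmap_eps_delta.
  by move=> x /=; rewrite epsH_q.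
move=> A; apply: functional_extensionality => c /=.
have [s ->] := qsurj _ c.
rewrite !deltaH_q Hmap_q deltaT_Tmap !Tmap_comp.
rewrite (@Tmap_ext _ _ _ (deltaH k n \o q k n) (q k n \o Tmap k (q k n) \o @deltaT k A)).
  by rewrite -(@Tmap_comp _ _ _ _ (@deltaT k A)) -deltaT_deltaT.
by move=> x /=; rewrite deltaH_q.
Qed.
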